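(* Let $G$ be a finite group and $p$ a prime with $\gcd(p-1,|G|)=1$. If $|G'|=p^2$ and $|G'\cap Z(G)|=p$, then $G$ is nilpotent of class $3$; in particular $G\cong P\times A$, where $A$ is an abelian group and $P$ is a $p$-group with $|P'|=p^2$ and $|P'\cap Z(P)|=p$.
   Context: $G'$ denotes the commutator subgroup and $Z(G)$ the center of $G$. *)

(* Defs.v *)
From mathcomp Require Import all_boot all_fingroup all_solvable.

(* Main.v *)
Require Import Defs.
From mathcomp Require Import all_boot all_fingroup all_solvable.
Set Implicit Arguments. Unset Strict Implicit. Unset Printing Implicit Defensive.
Local Open Scope group_scope.

Theorem lemma2p2 (gT : finGroupType) (G : {group gT}) (p : nat) :
  prime p -> coprime p.-1 #|G| ->
  #|G^`(1)| = (p ^ 2)%N -> #|G^`(1) :&: 'Z(G)| = p ->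
  (nilpotent G /\ nil_class G = 3%N) /\
  exists (P A : {group gT}),
    [/\ P \x A = G, abelian A, p.-group P,
        #|P^`(1)| = (p ^ 2)%N & #|P^`(1) :&: 'Z(P)| = p].
Proof.
move=> pr_p cop cardD cardN.
have p_gt1 := prime_gt1 pr_p.
set D := G^`(1) in cardD cardN *.
set N := D :&: 'Z(G) in cardN *.
have nDG : G \subset 'N(D) by apply: normal_norm; apply: der_normal.
have nZG : G \subset 'N('Z(G)) by apply: normal_norm; apply: center_normal.
have nNG : G \subset 'N(N) by rewrite normsI.
have sDG : D \subset G by apply: der_sub.
have sND : N \subset D by apply: subsetIl.
have nND : D \subset 'N(N) by apply: subset_trans nNG.
have cardH : #|D / N| = p.
  rewrite card_quotient // -divgS // cardD cardN expnS.
  by rewrite expn1 mulnK // ltnW.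
have nHK : G / N \subset 'N(D / N) by apply: quotient_norms.
have sKker : G / N \subset 'ker (conj_aut (D / N)).
  rewrite kerE -sub_morphim_pre // subG1 trivg_card1.
  have d1 : #|conj_aut (D / N) @* (G / N)| %| #|G|.
    by apply: dvdn_trans (dvdn_morphim _ _) (dvdn_morphim _ _).
  have d2 : #|conj_aut (D / N) @* (G / N)| %| p.-1.
    have := cardSg (Aut_conj_aut (D / N) (G / N)).
    by rewrite card_Aut_cyclic ?prime_cyclic ?cardH // totient_prime.
  have := coprime_dvdr d1 (coprime_dvdl d2 cop).
  by rewrite /coprime gcdnn.
rewrite ker_conj_aut in sKker.
have sRN : [~: D, G] \subset N.
  have sRG : [~: D, G] \subset G.
    by apply: subset_trans sDG; rewrite commg_subl.
  rewrite -quotient_sub1; last exact: subset_trans sRG nNG.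
  rewrite quotientR //.
  have -> : [~: D / N, G / N] = 1 by apply/commG1P; rewrite centsC.
  exact: subxx.
have L4 : 'L_4(G) = 1.
  apply/commG1P; apply: (subset_trans sRN).
  by rewrite subIset // orbC subIset // orbC subxx.
have nilG : nilpotent G by apply/lcnP; exists 3.
have L3 : 'L_3(G) != 1.
  apply/negP => /eqP /commG1P cGD.
  have sDZ : D \subset 'Z(G) by rewrite subsetI sDG; exact: cGD.
  move: cardN; rewrite /N (setIidPl sDZ) cardD => /eqP.
  by rewrite -{2}(expn1 p) eqn_exp2l.
split.
  split => //; apply/eqP; rewrite eqn_leq; apply/andP; split.
    exact/(lcn_nil_classP 3 nilG).
  by rewrite ltnNge; apply/negP => /(lcn_nil_classP 2 nilG) /eqP; apply/negP.
have defG := nilpotent_pcoreC p nilG.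
set P := 'O_p(G) in defG *; set A := 'O_p^'(G) in defG *.
have defD := der_dprod 1 defG.
have pD : p.-group D by rewrite /pgroup cardD pnatX pnat_id.
have A1 : A^`(1) = 1.
  apply/trivgP; rewrite -(coprime_TIg (pnat_coprime pD (pcore_pgroup _ G))).
  rewrite subsetI der_sub andbT.
  by rewrite -(dprodW defD) mulG_subr.
have PD : P^`(1) = D by rewrite -[D](dprodW defD) A1 mulg1.
exists [group of P], [group of A]; split => //.
- exact/derG1P.
- exact: pcore_pgroup.
- by rewrite PD.
apply: (etrans _ cardN); rewrite /= PD /N.
have defZ := center_dprod defG.
have sZP : 'Z(P) \subset 'Z(G) by rewrite -(dprodW defZ) mulG_subl.
congr #|_|.
suff HH : D :&: 'Z(P) == D :&: 'Z(G) by rewrite (eqP HH).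
rewrite eqEsubset (setIS _ sZP) /=.
have sDP : D \subset P by rewrite -PD der_sub.
rewrite subsetI subsetIl /= subsetI (subset_trans (subsetIl _ _) sDP) /=.
apply: subset_trans (subsetIr _ _) _.
apply: subset_trans (subsetIr _ _) _.
by apply: centS; apply: pcore_sub.
Qed.
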